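(* Let $p,q\in\mathbb{C}$ and let $\phi:\mathbb{R}^4\ni(u,s,v,t)\mapsto(u_2,s_2,v_1,t_1)\in\mathbb{R}^4$ be the map defined by $$u_2=v+t\frac{p-q}{s-t},\qquad v_1=u+s\frac{p-q}{s-t},\qquad s_2=\frac{1}{t}+\frac{p-q}{t(u-v)},\qquad t_1=\frac{1}{s}+\frac{p-q}{s(u-v)}.$$ Set $n(u,s,v,t)=(p-q+u-v)t-s(u-v)$ and $d(u,s,v,t)=(p-q+u-v)s-t(u-v)$. Then: (1) $\phi$ is measure preserving with density $m(u,s,v,t)=n(u,s,v,t)\,d(u,s,v,t)$; (2) $\phi$ preserves the Poisson structure $$\Omega=n\,\frac{s}{t}\,\frac{\partial}{\partial u}\wedge\frac{\partial}{\partial s}-d\,\frac{\partial}{\partial u}\wedge\frac{\partial}{\partial t}-n\,\frac{s}{t}\,\frac{\partial}{\partial s}\wedge\frac{\partial}{\partial v}-d\,\frac{\partial}{\partial v}\wedge\frac{\partial}{\partial t},$$ where $n=n(u,s,v,t)$, $d=d(u,s,v,t)$; (3) $\phi$ is a Liouville integrable map.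
   Context: A map $\phi:(u,s,v,t)\mapsto(u_2,s_2,v_1,t_1)$ is called measure preserving with density $m$ if $m(u_2,s_2,v_1,t_1)=\dfrac{\partial(u_2,s_2,v_1,t_1)}{\partial(u,s,v,t)}\,m(u,s,v,t)$, where the fraction denotes the Jacobian determinant of $\phi$. Liouville integrability of a map is meant in the standard sense (preservation of a Poisson structure together with a sufficient number of functionally independent invariants in involution). *)

(* Defs.v *)
From HB Require Import structures.
From mathcomp Require Import all_boot all_order all_algebra.
From mathcomp Require Import all_classical all_reals all_analysis.
Import numFieldNormedType.Exports.
Set Implicit Arguments. Unset Strict Implicit. Unset Printing Implicit Defensive.
Import Order.TTheory GRing.Theory Num.Theory.
Local Open Scope ring_scope.
Local Open Scope classical_set_scope.

Section Defs.
Variable R : realType.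

(** Points of R^n are row vectors 'rV[R]_n; coordinate i of x is x 0 i. *)

Definition pd n (F : 'rV[R]_n -> R) (j : 'I_n) (x : 'rV[R]_n) : R :=
  'D_(delta_mx 0 j) F x.

Definition jacobian n (phi : 'rV[R]_n -> 'rV[R]_n) (x : 'rV[R]_n) : 'M[R]_n :=
  \matrix_(i, j) pd (fun y => phi y 0 i) j x.

Definition measure_preserving n (phi : 'rV[R]_n -> 'rV[R]_n)
    (U : set 'rV[R]_n) (m : 'rV[R]_n -> R) : Prop :=
  forall x, U x -> m (phi x) = \det (jacobian phi x) * m x.

(** A bivector field P (P x i j = coefficient of d/dx_i /\ d/dx_j,
    skew-symmetric matrix) is a Poisson structure on U:
    smooth enough (differentiable entries), skew, and Jacobi identity. *)
Definition is_poisson n (P : 'rV[R]_n -> 'M[R]_n) (U : set 'rV[R]_n) : Prop :=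
  (forall x, U x -> forall i j, differentiable (fun y => P y i j) x) /\
  (forall x, U x -> (P x)^T = - P x) /\
  (forall x, U x -> forall i j k,
      \sum_l (P x i l * pd (fun y => P y j k) l x
            + P x j l * pd (fun y => P y k i) l x
            + P x k l * pd (fun y => P y i j) l x) = 0).

(** phi preserves the bivector P: phi_* P = P, i.e.
    P(phi x) = J(x) P(x) J(x)^T wherever x and phi x lie in U. *)
Definition preserves_poisson n (phi : 'rV[R]_n -> 'rV[R]_n)
    (U : set 'rV[R]_n) (P : 'rV[R]_n -> 'M[R]_n) : Prop :=
  forall x, U x -> U (phi x) ->
    P (phi x) = jacobian phi x *m P x *m (jacobian phi x)^T.

Definition grad n (F : 'rV[R]_n -> R) (x : 'rV[R]_n) : 'rV[R]_n :=
  \row_j pd F j x.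

Definition pbracket n (P : 'rV[R]_n -> 'M[R]_n) (F G : 'rV[R]_n -> R)
    (x : 'rV[R]_n) : R :=
  (grad F x *m P x *m (grad G x)^T) 0 0.

(** Liouville integrability of phi on its (open) domain U:
    there is a Poisson structure P on U preserved by phi, of (maximal) rank
    2r, and k = n - r invariants I_1..I_k of phi which are differentiable,
    functionally independent (gradients linearly independent on a dense
    subset of U) and pairwise in involution. *)
Definition liouville_integrable n (phi : 'rV[R]_n -> 'rV[R]_n)
    (U : set 'rV[R]_n) : Prop :=
  exists (P : 'rV[R]_n -> 'M[R]_n) (r : nat),
    is_poisson P U /\ preserves_poisson phi U P /\
    (forall x, U x -> (\rank (P x) <= r.*2)%N) /\
    (exists x, U x /\ \rank (P x) = r.*2) /\
    exists I : 'I_(n - r) -> 'rV[R]_n -> R,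
      (forall a x, U x -> differentiable (I a) x) /\
      (forall a x, U x -> U (phi x) -> I a (phi x) = I a x) /\
      U `<=` closure [set x | U x /\ row_free (\matrix_(a < n - r) grad (I a) x)] /\
      (forall a b x, U x -> pbracket P (I a) (I b) x = 0).

(** The specific map of the statement, coordinates (u,s,v,t) = x 0 0..3,
    with c = p - q. *)
Section Map.
Variable c : R.
Definition cu (x : 'rV[R]_4) := x 0 0.
Definition cs (x : 'rV[R]_4) := x 0 1.
Definition cv (x : 'rV[R]_4) := x 0 2.
Definition ct (x : 'rV[R]_4) := x 0 3.

Definition phi_map (x : 'rV[R]_4) : 'rV[R]_4 :=
  let u := cu x in let s := cs x in let v := cv x in let t := ct x in
  \row_(i < 4) [:: v + t * (c / (s - t));
                   t^-1 + c / (t * (u - v));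
                   u + s * (c / (s - t));
                   s^-1 + c / (s * (u - v))]`_i.

Definition phi_dom : set 'rV[R]_4 :=
  [set x | cs x != ct x /\ ct x != 0 /\ cs x != 0 /\ cu x != cv x].

Definition nfun (x : 'rV[R]_4) : R :=
  (c + cu x - cv x) * ct x - cs x * (cu x - cv x).
Definition dfun (x : 'rV[R]_4) : R :=
  (c + cu x - cv x) * cs x - ct x * (cu x - cv x).

Definition mdens (x : 'rV[R]_4) : R := nfun x * dfun x.

Definition Omega (x : 'rV[R]_4) : 'M[R]_4 :=
  let a := nfun x * (cs x / ct x) in
  let b := dfun x in
  \matrix_(i < 4, j < 4)
    nth 0 (nth [::] [:: [:: 0;  a; 0; -b];
                       [:: -a; 0; -a; 0];
                       [:: 0;  a; 0; -b];
                       [:: b;  0; b; 0]] i) j.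
End Map.
End Defs.

(* Main.v *)
Require Import Defs.
From HB Require Import structures.
From mathcomp Require Import all_boot all_order all_algebra.
From mathcomp Require Import all_classical all_reals all_analysis.
From mathcomp Require Import ring.
Import Order.TTheory GRing.Theory Num.Theory.
Import numFieldNormedType.Exports.
Local Open Scope ring_scope.
Local Open Scope classical_set_scope.
From mathcomp Require Import lra.
Section D.
Variable R : realType.
Variable n : nat.
Implicit Types (x v : 'rV[R]_n) (f g : 'rV[R]_n -> R).

Lemma dD f g x v df dg : is_derive x v f df -> is_derive x v g dg ->
  is_derive x v (fun y => f y + g y) (df + dg).
Proof. move=> H1 H2. exact: (@is_deriveD _ _ _ f g x v df dg). Qed.

Lemma dN f x v df : is_derive x v f df -> is_derive x v (fun y => - f y) (- df).
Proof. move=> H1. exact: (@is_deriveN _ _ _ f x v df). Qed.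

Lemma dB f g x v df dg : is_derive x v f df -> is_derive x v g dg ->
  is_derive x v (fun y => f y - g y) (df - dg).
Proof. move=> H1 H2. exact: (@is_deriveB _ _ _ f g x v df dg). Qed.

Lemma dM f g x v df dg : is_derive x v f df -> is_derive x v g dg ->
  is_derive x v (fun y => f y * g y) (f x * dg + g x * df).
Proof. move=> [H1 E1] [H2 E2]. split.
  exact: (@derivableM _ _ f g x v).
by rewrite (@deriveM _ _ f g x v) // E1 E2.
Qed.

Lemma dV f x v df : f x != 0 -> is_derive x v f df ->
  is_derive x v (fun y => (f y)^-1) (- (f x)^-2 * df).
Proof. move=> H0 [H1 H2]. split.
  exact: derivableV.
by rewrite deriveV // H2.
Qed.

Lemma dC (k : R) x v : is_derive x v (fun _ => k) 0.
Proof. exact: (@is_derive_cst _ _ _ k x v). Qed.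

Lemma dX (i : 'I_1) (k : 'I_n) x v : is_derive x v (fun y => y i k) (v i k).
Proof.
have @f : {linear 'rV[R]_n -> R}.
  by exists (fun N : 'M[R]_(_, _) => N i k); do 2![eexists]; do ?[constructor];
     rewrite ?mxE// => ? *; rewrite ?mxE//; move=> ?; rewrite !mxE.
rewrite (_ : (fun _ => _) = f) //.
have df : differentiable f x by exact: differentiable_coord.
split; first exact: diff_derivable.
by rewrite deriveE // diff_lin //= ; exact/coord_continuous.
Qed.

Lemma fD f g x : differentiable f x -> differentiable g x ->
  differentiable (fun y => f y + g y) x.
Proof. exact: differentiableD. Qed.
Lemma fN f x : differentiable f x -> differentiable (fun y => - f y) x.
Proof. exact: differentiableN. Qed.
Lemma fM f g x : differentiable f x -> differentiable g x ->
  differentiable (fun y => f y * g y) x.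
Proof. exact: differentiableM. Qed.
Lemma fV f x : f x != 0 -> differentiable f x -> differentiable (fun y => (f y)^-1) x.
Proof. by move=> h1 h2; exact: differentiableV. Qed.
Lemma fC (k : R) x : differentiable (fun _ : 'rV[R]_n => k) x.
Proof. exact: differentiable_cst. Qed.
Lemma fX (i : 'I_1) (k : 'I_n) x : differentiable (fun y : 'rV[R]_n => y i k) x.
Proof. exact: differentiable_coord. Qed.
End D.
Arguments dN {R n f x v df}.
Arguments dD {R n f g x v df dg}.
Arguments dM {R n f g x v df dg}.

Lemma det4 (R : comRingType) (a : nat -> nat -> R) :
  \det (\matrix_(i < 4, j < 4) a i j) = 
  a 0 0 * (a 1 1 * (a 2 2 * a 3 3 - a 2 3 * a 3 2) - a 1 2 * (a 2 1 * a 3 3 - a 2 3 * a 3 1) + a 1 3 * (a 2 1 * a 3 2 - a 2 2 * a 3 1))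
- a 0 1 * (a 1 0 * (a 2 2 * a 3 3 - a 2 3 * a 3 2) - a 1 2 * (a 2 0 * a 3 3 - a 2 3 * a 3 0) + a 1 3 * (a 2 0 * a 3 2 - a 2 2 * a 3 0))
+ a 0 2 * (a 1 0 * (a 2 1 * a 3 3 - a 2 3 * a 3 1) - a 1 1 * (a 2 0 * a 3 3 - a 2 3 * a 3 0) + a 1 3 * (a 2 0 * a 3 1 - a 2 1 * a 3 0))
- a 0 3 * (a 1 0 * (a 2 1 * a 3 2 - a 2 2 * a 3 1) - a 1 1 * (a 2 0 * a 3 2 - a 2 2 * a 3 0) + a 1 2 * (a 2 0 * a 3 1 - a 2 1 * a 3 0)).
Proof.
rewrite (expand_det_row _ 0) !big_ord_recl big_ord0 /cofactor.
rewrite !(expand_det_row _ 0) !big_ord_recl !big_ord0 /cofactor.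
rewrite !(expand_det_row _ 0) !big_ord_recl !big_ord0 /cofactor.
rewrite !det_mx11 !mxE /=.
rewrite /bump /=.
rewrite !expr0 ?expr1 ?exprS ?expr0 /=.
ring.
Qed.

Lemma derE (R : realType) n (F : 'rV[R]_n -> R) x v df : is_derive x v F df -> 'D_v F x = df.
Proof. by move=> H; rewrite derive_val. Qed.
Arguments derE {R n F x v df}.

Ltac ftac := repeat first [ apply: fX | apply: fC | apply: fD | apply: fN | apply: fM | apply: fV ].
Ltac dtac := repeat first [ apply: dX | apply: dC | apply: dD | apply: dN | apply: dM | apply: dV ].
Ltac nz := rewrite /=; repeat (apply/andP; split); repeat (apply: mulf_neq0 || apply: expf_neq0 || apply: invr_neq0); rewrite ?subr_eq0 //.

Section M.
Variable R : realType.
Variable c : R.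



Lemma Du2 (x v : 'rV[R]_4) : phi_dom x ->
  'D_v (fun y => phi_map c y 0 0) x =
  v 0 1 * (- x 0 3 * c / (x 0 1 - x 0 3)^+2) + v 0 2 + v 0 3 * (c * x 0 1 / (x 0 1 - x 0 3)^+2).
Proof.
rewrite /phi_dom /cs /ct /cu /cv /=; case=> [hst [ht [hs huv]]].
rewrite (_ : (fun y => phi_map c y 0 0) = (fun y => y 0 2 + y 0 3 * (c * (y 0 1 - y 0 3)^-1))); last first.
  by apply/funext => y; rewrite mxE.
erewrite derE; last by dtac; nz.
rewrite /=; field; nz.
Qed.

Lemma Ds2 (x v : 'rV[R]_4) : phi_dom x ->
  'D_v (fun y => phi_map c y 0 1) x =
  v 0 0 * (- c / (x 0 3 * (x 0 0 - x 0 2)^+2)) + v 0 2 * (c / (x 0 3 * (x 0 0 - x 0 2)^+2))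
  + v 0 3 * (- (x 0 3)^-2 - c / ((x 0 3)^+2 * (x 0 0 - x 0 2))).
Proof.
rewrite /phi_dom /cs /ct /cu /cv /=; case=> [hst [ht [hs huv]]].
rewrite (_ : (fun y => phi_map c y 0 1) = (fun y => (y 0 3)^-1 + c * (y 0 3 * (y 0 0 - y 0 2))^-1)); last first.
  by apply/funext => y; rewrite mxE.
erewrite derE; last by dtac; nz.
rewrite /=; field; nz.
Qed.

Lemma Dv1 (x v : 'rV[R]_4) : phi_dom x ->
  'D_v (fun y => phi_map c y 0 2) x =
  v 0 0 + v 0 1 * (- c * x 0 3 / (x 0 1 - x 0 3)^+2) + v 0 3 * (c * x 0 1 / (x 0 1 - x 0 3)^+2).
Proof.
rewrite /phi_dom /cs /ct /cu /cv /=; case=> [hst [ht [hs huv]]].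
rewrite (_ : (fun y => phi_map c y 0 2) = (fun y => y 0 0 + y 0 1 * (c * (y 0 1 - y 0 3)^-1))); last first.
  by apply/funext => y; rewrite mxE.
erewrite derE; last by dtac; nz.
rewrite /=; field; nz.
Qed.

Lemma Dt1 (x v : 'rV[R]_4) : phi_dom x ->
  'D_v (fun y => phi_map c y 0 3) x =
  v 0 0 * (- c / (x 0 1 * (x 0 0 - x 0 2)^+2)) 
  + v 0 1 * (- (x 0 1)^-2 - c / ((x 0 1)^+2 * (x 0 0 - x 0 2)))
  + v 0 2 * (c / (x 0 1 * (x 0 0 - x 0 2)^+2)).
Proof.
rewrite /phi_dom /cs /ct /cu /cv /=; case=> [hst [ht [hs huv]]].
rewrite (_ : (fun y => phi_map c y 0 3) = (fun y => (y 0 1)^-1 + c * (y 0 1 * (y 0 0 - y 0 2))^-1)); last first.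
  by apply/funext => y; rewrite mxE.
erewrite derE; last by dtac; nz.
rewrite /=; field; nz.
Qed.


Definition jf (x : 'rV[R]_4) (i j : nat) : R :=
  let u := x 0 0 in let s := x 0 1 in let v := x 0 2 in let t := x 0 3 in
  nth 0 (nth [::] [::
  [:: 0; - t * c / (s - t)^+2; 1; c * s / (s - t)^+2];
  [:: - c / (t * (u - v)^+2); 0; c / (t * (u - v)^+2); - t^-2 - c / (t^+2 * (u - v))];
  [:: 1; - c * t / (s - t)^+2; 0; c * s / (s - t)^+2];
  [:: - c / (s * (u - v)^+2); - s^-2 - c / (s^+2 * (u - v)); c / (s * (u - v)^+2); 0]] i) j.

Lemma jacE x : phi_dom x -> Defs.jacobian (phi_map c) x = \matrix_(i < 4, j < 4) jf x i j.
Proof.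
move=> hx; apply/matrixP => i j; rewrite !mxE /pd.
case: i => [[|[|[|[|i]]]] Hi] //.
- rewrite (_ : Ordinal Hi = 0); last exact: val_inj.
  rewrite Du2 //.
  case: j => [[|[|[|[|j]]]] Hj] //; rewrite !mxE /= /jf /=; ring.
- rewrite (_ : Ordinal Hi = 1); last exact: val_inj.
  rewrite Ds2 //.
  case: j => [[|[|[|[|j]]]] Hj] //; rewrite !mxE /= /jf /=; ring.
- rewrite (_ : Ordinal Hi = 2); last exact: val_inj.
  rewrite Dv1 //.
  case: j => [[|[|[|[|j]]]] Hj] //; rewrite !mxE /= /jf /=; ring.
- rewrite (_ : Ordinal Hi = 3); last exact: val_inj.
  rewrite Dt1 //.
  case: j => [[|[|[|[|j]]]] Hj] //; rewrite !mxE /= /jf /=; ring.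
Qed.

Lemma meas x : phi_dom x -> mdens c (phi_map c x) = \det (Defs.jacobian (phi_map c) x) * mdens c x.
Proof.
move=> hx; rewrite jacE // det4 /jf /= /mdens /nfun /dfun /cu /cs /cv /ct !mxE /=.
move: hx; rewrite /phi_dom /cs /ct /cu /cv /=; case=> [hst [ht [hs huv]]].
field; nz.
Qed.

Lemma presO x : phi_dom x -> phi_dom (phi_map c x) ->
  Omega c (phi_map c x) = Defs.jacobian (phi_map c) x *m Omega c x *m (Defs.jacobian (phi_map c) x)^T.
Proof.
move=> hx hy; rewrite jacE //.
move: hx; rewrite /phi_dom /cs /ct /cu /cv /=; case=> [hst [ht [hs huv]]].
have hw : x 0 0 - x 0 2 + c != 0.
  case: hy => [_ [_ [+ _]]]; rewrite /cs /phi_map mxE /=.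
  apply: contra => /eqP h.
  have hc : c = - (x 0 0 - x 0 2) by apply/eqP; rewrite -addr_eq0 addrC h.
  apply/eqP; rewrite hc /ct /cu /cv; field; nz.
apply/matrixP => i j; rewrite /Omega !mxE !big_ord_recl !big_ord0 !mxE !big_ord_recl !big_ord0 !mxE /=.
rewrite /jf /nfun /dfun /cu /cs /cv /ct /phi_map.
case: i => [[|[|[|[|i]]]] Hi] //; case: j => [[|[|[|[|j]]]] Hj] //; rewrite /= ?mxE /= /cu /cs /cv /ct.
all: field; nz.
Qed.

End M.

Definition Om {R : ringType} (a b : R) : 'M[R]_4 := \matrix_(i < 4, j < 4)
  nth 0 (nth [::] [:: [:: 0; a; 0; -b]; [:: -a; 0; -a; 0]; [:: 0; a; 0; -b]; [:: b; 0; b; 0]] i) j.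

Lemma jac_abs (R : comRingType) (a b : R) (da db : nat -> R) :
  da 0%N + da 2%N = 0 -> db 0%N + db 2%N = 0 -> forall i j k : 'I_4,
  \sum_(l < 4) (Om a b i l * Om (da l) (db l) j k + Om a b j l * Om (da l) (db l) k i
     + Om a b k l * Om (da l) (db l) i j) = 0.
Proof.
move=> h1 h2 i j k.
have e1 : da 2%N = - da 0%N by apply/eqP; rewrite -addr_eq0 addrC h1.
have e2 : db 2%N = - db 0%N by apply/eqP; rewrite -addr_eq0 addrC h2.
rewrite !big_ord_recl big_ord0 !mxE /= e1 e2.
Time (case: i => [[|[|[|[|i]]]] Hi]; last by []);
   (case: j => [[|[|[|[|j]]]] Hj]; last by []);
   (case: k => [[|[|[|[|k]]]] Hk]; last by []).
Time all: rewrite /=; ring.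
Qed.

Section M2. Variable R : realType. Variable c : R.
Definition Af (y : 'rV[R]_4) : R := nfun c y * (cs y / ct y).
Definition Bf (y : 'rV[R]_4) : R := dfun c y.

Lemma Omega_fun (j k : 'I_4) : (fun y => Omega c y j k) = fun y =>
  nth 0 (nth [::] [:: [:: 0;  Af y; 0; - Bf y];
                       [:: - Af y; 0; - Af y; 0];
                       [:: 0;  Af y; 0; - Bf y];
                       [:: Bf y;  0; Bf y; 0]] j) k.
Proof. by apply/funext => y; rewrite mxE. Qed.

Lemma Af_fun : Af = fun y => ((c + y 0 0 - y 0 2) * y 0 3 - y 0 1 * (y 0 0 - y 0 2)) * (y 0 1 * (y 0 3)^-1).
Proof. by []. Qed.
Lemma Bf_fun : Bf = fun y => (c + y 0 0 - y 0 2) * y 0 1 - y 0 3 * (y 0 0 - y 0 2).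
Proof. by []. Qed.

Definition dAf (x v : 'rV[R]_4) : R :=
  v 0 0 * (x 0 1 - x 0 1 ^+ 2 / x 0 3) + v 0 1 * (c + x 0 0 - x 0 2 - 2 * x 0 1 * (x 0 0 - x 0 2) / x 0 3)
   + v 0 2 * (- x 0 1 + x 0 1 ^+ 2 / x 0 3) + v 0 3 * (x 0 1 ^+ 2 * (x 0 0 - x 0 2) / x 0 3 ^+ 2).
Definition dBf (x v : 'rV[R]_4) : R :=
  v 0 0 * (x 0 1 - x 0 3) + v 0 1 * (c + x 0 0 - x 0 2) + v 0 2 * (x 0 3 - x 0 1) + v 0 3 * (x 0 2 - x 0 0).

Lemma DA (x v : 'rV[R]_4) : x 0 3 != 0 -> is_derive x v Af (dAf x v).
Proof.
move=> ht; rewrite Af_fun; apply: is_derive_eq; first by dtac; nz.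
rewrite /dAf /=; field; nz.
Qed.

Lemma DB (x v : 'rV[R]_4) : is_derive x v Bf (dBf x v).
Proof.
rewrite Bf_fun; apply: is_derive_eq; first by dtac.
rewrite /dBf /=; ring.
Qed.

Lemma poisO : is_poisson (Omega c) (@phi_dom R).
Proof.
split; [|split].
- move=> x; rewrite /phi_dom /cs /ct /cu /cv /=; case=> [hst [ht [hs huv]]] i j.
  rewrite Omega_fun Af_fun Bf_fun.
  case: i => [[|[|[|[|i]]]] Hi] //; case: j => [[|[|[|[|j]]]] Hj] //= ; ftac; nz.
- move=> x _; apply/matrixP => i j; rewrite !mxE.
  case: i => [[|[|[|[|i]]]] Hi] //; case: j => [[|[|[|[|j]]]] Hj] //=; rewrite ?opprK ?oppr0 //.
- move=> x; rewrite /phi_dom /cs /ct /cu /cv /=; case=> [hst [ht [hs huv]]] i j k.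
  have hD : forall (j k l : 'I_4), pd (fun y => Omega c y j k) l x =
     Om (dAf x (delta_mx 0 l)) (dBf x (delta_mx 0 l)) j k.
    move=> j' k' l; rewrite /pd Omega_fun !mxE.
    have hA := DA x (delta_mx 0 l) ht; have hB := DB x (delta_mx 0 l).
    case: j' => [[|[|[|[|j']]]] Hj'] //; case: k' => [[|[|[|[|k']]]] Hk'] //=.
    all: try first [ exact: derive_cst | exact: (derE hA) | exact: (derE (dN hA)) | exact: (derE hB) | exact: (derE (dN hB)) ].
  pose da (n : nat) : R := nth 0 [:: x 0 1 - x 0 1 ^+ 2 / x 0 3;
     c + x 0 0 - x 0 2 - 2 * x 0 1 * (x 0 0 - x 0 2) / x 0 3;
     - x 0 1 + x 0 1 ^+ 2 / x 0 3; x 0 1 ^+ 2 * (x 0 0 - x 0 2) / x 0 3 ^+ 2] n.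
  pose db (n : nat) : R := nth 0 [:: x 0 1 - x 0 3; c + x 0 0 - x 0 2; x 0 3 - x 0 1; x 0 2 - x 0 0] n.
  have hDA : forall l : 'I_4, dAf x (delta_mx 0 l) = da l.
    move=> l; rewrite /dAf !mxE.
    by case: l => [[|[|[|[|l]]]] Hl] //=; rewrite /da /=; ring.
  have hDB : forall l : 'I_4, dBf x (delta_mx 0 l) = db l.
    move=> l; rewrite /dBf !mxE.
    by case: l => [[|[|[|[|l]]]] Hl] //=; rewrite /db /=; ring.
  have hO : forall j l : 'I_4, Omega c x j l = Om (Af x) (Bf x) j l.
    by move=> j' l; rewrite !mxE.
  have := @jac_abs R (Af x) (Bf x) da db _ _ i j k.
  rewrite /da /db /=.
  move=> /(_ (ltac:(ring)) (ltac:(ring))) H; apply: (etrans _ H).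
  apply: eq_bigr => l _.
  by rewrite !hO !hD !hDA !hDB.
Qed.
End M2.


Definition Pat {R : ringType} (s t : R) : 'M[R]_4 := \matrix_(i < 4, j < 4)
  nth 0 (nth [::] [:: [:: 0; 0; 0; -t]; [:: 0; 0; -s; 0]; [:: 0; s; 0; 0]; [:: t; 0; 0; 0]] i) j.

Lemma jacP_abs (R : comRingType) (s t : R) : forall i j k : 'I_4,
  \sum_(l < 4) (Pat s t i l * Pat ((l == 1%N :> nat)%:R) ((l == 3%N :> nat)%:R) j k
     + Pat s t j l * Pat ((l == 1%N :> nat)%:R) ((l == 3%N :> nat)%:R) k i
     + Pat s t k l * Pat ((l == 1%N :> nat)%:R) ((l == 3%N :> nat)%:R) i j) = 0.
Proof.
move=> i j k.
rewrite !big_ord_recl big_ord0 !mxE /=.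
(case: i => [[|[|[|[|i]]]] Hi]; last by []);
   (case: j => [[|[|[|[|j]]]] Hj]; last by []);
   (case: k => [[|[|[|[|k]]]] Hk]; last by []).
all: rewrite /=; ring.
Qed.

Lemma dl1 (R : ringType) (l : 'I_4) : (delta_mx 0 l : 'rV[R]_4) 0 1 = (l == 1%N :> nat)%:R :> R.
Proof. rewrite mxE eqxx /=. by case: l => [[|[|[|[|l]]]] Hl]. Qed.
Lemma dl3 (R : ringType) (l : 'I_4) : (delta_mx 0 l : 'rV[R]_4) 0 3 = (l == 3%N :> nat)%:R :> R.
Proof. rewrite mxE eqxx /=. by case: l => [[|[|[|[|l]]]] Hl]. Qed.

Section M3.
Variable R : realType.
Variable c : R.

Definition Pm (x : 'rV[R]_4) : 'M[R]_4 := Pat (x 0 1) (x 0 3).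

Lemma poisP : is_poisson Pm (@phi_dom R).
Proof.
have hF : forall j k : 'I_4, (fun y : 'rV[R]_4 => Pm y j k) = fun y =>
  nth 0 (nth [::] [:: [:: 0; 0; 0; - y 0 3]; [:: 0; 0; - y 0 1; 0]; [:: 0; y 0 1; 0; 0]; [:: y 0 3; 0; 0; 0]] j) k.
  by move=> j k; apply/funext => y; rewrite mxE.
split; [|split].
- move=> x _ i j; rewrite hF.
  case: i => [[|[|[|[|i]]]] Hi] //; case: j => [[|[|[|[|j]]]] Hj] //= ; ftac.
- move=> x _; apply/matrixP => i j; rewrite !mxE.
  case: i => [[|[|[|[|i]]]] Hi] //; case: j => [[|[|[|[|j]]]] Hj] //=; rewrite ?opprK ?oppr0 //.
- move=> x _ i j k.
  have hD : forall (j k l : 'I_4), pd (fun y => Pm y j k) l x =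
     Pat ((l == 1%N :> nat)%:R) ((l == 3%N :> nat)%:R) j k.
    move=> j' k' l; rewrite /pd hF /Pat mxE.
    have e1 := dl1 R l.
    have e3 := dl3 R l.
    rewrite -e1 -e3.
    have hs := @dX R 4 0 1 x (delta_mx 0 l); have ht := @dX R 4 0 3 x (delta_mx 0 l).
    case: j' => [[|[|[|[|j']]]] Hj'] //; case: k' => [[|[|[|[|k']]]] Hk'] //=.
    all: try first [ exact: derive_cst | exact: (derE hs) | exact: (derE (dN hs)) | exact: (derE ht) | exact: (derE (dN ht)) ].
  have := @jacP_abs R (x 0 1) (x 0 3) i j k.
  move=> H; apply: (etrans _ H).
  by apply: eq_bigr => l _; rewrite !hD.
Qed.

Lemma presP x : phi_dom x -> phi_dom (phi_map c x) ->
  Pm (phi_map c x) = Defs.jacobian (phi_map c) x *m Pm x *m (Defs.jacobian (phi_map c) x)^T.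
Proof.
move=> hx hy; rewrite jacE //.
move: hx; rewrite /phi_dom /cs /ct /cu /cv /=; case=> [hst [ht [hs huv]]].
have hw : x 0 0 - x 0 2 + c != 0.
  case: hy => [_ [_ [+ _]]]; rewrite /cs /phi_map mxE /=.
  apply: contra => /eqP h.
  have hc : c = - (x 0 0 - x 0 2) by apply/eqP; rewrite -addr_eq0 addrC h.
  apply/eqP; rewrite hc /ct /cu /cv; field; nz.
apply/matrixP => i j; rewrite /Pm /Pat !mxE !big_ord_recl !big_ord0 !mxE !big_ord_recl !big_ord0 !mxE /=.
rewrite /jf /phi_map.
case: i => [[|[|[|[|i]]]] Hi] //; case: j => [[|[|[|[|j]]]] Hj] //; rewrite /= ?mxE /= /cu /cs /cv /ct.
all: field; nz.
Qed.
End M3.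


Section M4.
Variable R : realType.
Variable c : R.

Definition I1 (y : 'rV[R]_4) : R := (y 0 0 - y 0 2) * (y 0 0 - y 0 2 + c).
Definition I2 (y : 'rV[R]_4) : R := y 0 1 * (y 0 3)^-1.
Definition Iv (a : 'I_(4 - 2)) : 'rV[R]_4 -> R := if (a : nat) == 0%N then I1 else I2.

Lemma DI1 (x v : 'rV[R]_4) : is_derive x v I1 ((2 * (x 0 0 - x 0 2) + c) * (v 0 0 - v 0 2)).
Proof. apply: is_derive_eq; first by rewrite /I1; dtac. rewrite /=; ring. Qed.

Lemma DI2 (x v : 'rV[R]_4) : x 0 3 != 0 -> is_derive x v I2 (v 0 1 / x 0 3 - x 0 1 * v 0 3 / x 0 3 ^+ 2).
Proof. move=> ht; apply: is_derive_eq; first by rewrite /I2; dtac; nz. rewrite /=; field; nz. Qed.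

Lemma gradI1 (x : 'rV[R]_4) : grad I1 x = \row_(j < 4) nth 0 [:: 2 * (x 0 0 - x 0 2) + c; 0; - (2 * (x 0 0 - x 0 2) + c); 0] j.
Proof.
apply/matrixP => i j; rewrite !mxE /pd (derE (DI1 x _)) !mxE.
by case: j => [[|[|[|[|j]]]] Hj] //=; ring.
Qed.

Lemma gradI2 (x : 'rV[R]_4) : x 0 3 != 0 -> grad I2 x = \row_(j < 4) nth 0 [:: 0; (x 0 3)^-1; 0; - x 0 1 / x 0 3 ^+ 2] j.
Proof.
move=> ht; apply/matrixP => i j; rewrite !mxE /pd (derE (DI2 x _ ht)) !mxE.
by case: j => [[|[|[|[|j]]]] Hj] //=; field.
Qed.

Lemma brI (x : 'rV[R]_4) (a b : 'I_(4 - 2)) : phi_dom x -> pbracket (@Pm R) (Iv a) (Iv b) x = 0.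
Proof.
rewrite /phi_dom /cs /ct /cu /cv /=; case=> [hst [ht [hs huv]]].
rewrite /pbracket /Iv.
case: a => [[|[|a]] Ha] //; case: b => [[|[|b]] Hb] //=;
  rewrite ?gradI1 ?gradI2 // /Pm /Pat !mxE !big_ord_recl !big_ord0 !mxE !big_ord_recl !big_ord0 !mxE /=; field; nz.
Qed.

Lemma rfree (x : 'rV[R]_4) : x 0 3 != 0 -> 2 * (x 0 0 - x 0 2) + c != 0 ->
  row_free (\matrix_(a < 4 - 2) grad (Iv a) x).
Proof.
move=> ht hg.
have hM : \matrix_(a < 4 - 2) grad (Iv a) x = \matrix_(i < 2, j < 4) nth 0 (nth [::]
   [:: [:: 2 * (x 0 0 - x 0 2) + c; 0; - (2 * (x 0 0 - x 0 2) + c); 0];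
       [:: 0; (x 0 3)^-1; 0; - x 0 1 / x 0 3 ^+ 2]] i) j.
  apply/matrixP => i j; rewrite [LHS]mxE [RHS]mxE.
  case: i => [[|[|i]] Hi] //=; [rewrite gradI1 | rewrite gradI2 //]; by rewrite mxE.
rewrite hM; apply/row_freeP.
exists (\matrix_(i < 4, j < 2) nth 0 (nth [::] [:: [:: (2 * (x 0 0 - x 0 2) + c)^-1; 0]; [:: 0; x 0 3]; [:: 0; 0]; [:: 0; 0]] i) j).
apply/matrixP => i j; rewrite !mxE !big_ord_recl big_ord0 !mxE.
case: i => [[|[|i]] Hi] //; case: j => [[|[|j]] Hj] //=; field; nz.
Qed.

Lemma invI (x : 'rV[R]_4) (a : 'I_(4 - 2)) : phi_dom x -> phi_dom (phi_map c x) -> Iv a (phi_map c x) = Iv a x.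
Proof.
rewrite /phi_dom /cs /ct /cu /cv /=; case=> [hst [ht [hs huv]]].
case=> [_ [ht2 _]].
move: ht2; rewrite /ct /phi_map mxE /= => ht2.
rewrite /Iv /I1 /I2.
have hw : x 0 0 - x 0 2 + c != 0.
  move: ht2; rewrite /cs /ct /cu /cv.
  apply: contra => /eqP h.
  have hc : c = - (x 0 0 - x 0 2) by apply/eqP; rewrite -addr_eq0 addrC h.
  apply/eqP; rewrite hc; field; nz.
case: a => [[|[|a]] Ha] //=; rewrite !mxE /= /cs /ct /cu /cv.
  field; nz.
field; nz.
Qed.

End M4.


Section M5.
Variable R : realType.
Variable c : R.

Lemma dense : @phi_dom R `<=` closure [set x | phi_dom x /\ row_free (\matrix_(a < 4 - 2) grad (@Iv R c a) x)].
Proof.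
move=> x hx; have hx' := hx.
move: hx'; rewrite /phi_dom /cs /ct /cu /cv /=; case=> [hst [ht [hs huv]]].
have [hg|hg0] := eqVneq (2 * (x 0 0 - x 0 2) + c) 0; last first.
  by apply: subset_closure; split => //; apply: rfree.
move=> B nB.
pose e0 : 'rV[R]_4 := delta_mx 0 0.
have H : (fun h : R => h *: e0 + x) @ 0 --> 0 *: e0 + x.
  by apply: cvgD; [exact: scalel_continuous | exact: cvg_cst].
rewrite scale0r add0r in H.
have := H B nB.
move=> /nbhs_norm0P [e /= epos He].
have hw : x 0 0 - x 0 2 != 0 by rewrite subr_eq0.
pose h := Num.min (e / 2) (`|x 0 0 - x 0 2| / 2).
have hwp : 0 < `|x 0 0 - x 0 2| by rewrite normr_gt0.
have h0 : 0 < h by rewrite /h lt_min; apply/andP; split; lra.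
have he : `|h| < e by rewrite gtr0_norm // /h gt_min; apply/orP; left; lra.
have hlw : h < `|x 0 0 - x 0 2| by rewrite /h gt_min; apply/orP; right; lra.
have hwh : x 0 0 - x 0 2 + h != 0.
  apply/eqP => E; move: hlw; have -> : x 0 0 - x 0 2 = - h by apply/eqP; rewrite -addr_eq0 E.
  by rewrite normrN gtr0_norm // ltxx.
exists (h *: e0 + x); split; last exact: He.
have E0 : forall k : 'I_4, (h *: e0 + x) 0 k = (if (k : nat) == 0%N then h else 0) + x 0 k.
  move=> k; rewrite !mxE /=; case: k => [[|[|[|[|k]]]] Hk] //=; rewrite ?mulr1 ?mulr0 //.
have hy : phi_dom (h *: e0 + x).
  rewrite /phi_dom /cs /ct /cu /cv /= !E0 /= !add0r; split => //; split => //; split => //.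
  rewrite -subr_eq0 (_ : h + x 0 0 - x 0 2 = x 0 0 - x 0 2 + h) //; ring.
split => //; apply: rfree; rewrite !E0 /= ?add0r //.
rewrite (_ : 2 * (h + x 0 0 - x 0 2) + c = 2 * (x 0 0 - x 0 2) + c + 2 * h); last by ring.
by rewrite hg add0r mulf_neq0 // ?pnatr_eq0 // gt_eqF.
Qed.

Lemma rk_le (x : 'rV[R]_4) : (\rank (@Pm R x) <= (2%N).*2)%N.
Proof. exact: rank_leq_col. Qed.

Definition x0 : 'rV[R]_4 := \row_(i < 4) [:: 1; 2; 0; 1]`_i.

Lemma x0_dom : @phi_dom R x0.
Proof.
rewrite /phi_dom /x0 /cs /ct /cu /cv /= !mxE /=.
have h2 : (2 : R) != 1 by rewrite -subr_eq0 (_ : (2:R) - 1 = 1) ?oner_neq0 //; ring.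
repeat split; by first [exact: h2 | exact: oner_neq0 | rewrite pnatr_eq0 | lra].
Qed.

Lemma rk_x0 : \rank (@Pm R x0) = (2%N).*2.
Proof.
apply: mxrank_unit; rewrite unitmxE unitfE /Pm /Pat.
rewrite (@det4 _ (fun i j : nat => nth 0 (nth [::] [:: [:: 0; 0; 0; - x0 0 3]; [:: 0; 0; - x0 0 1; 0]; [:: 0; x0 0 1; 0; 0]; [:: x0 0 3; 0; 0; 0]] i) j)) /= /x0 !mxE /=.
set d := (X in X != 0). have -> : d = 4 by rewrite /d; ring.
by rewrite pnatr_eq0.
Qed.
End M5.


Section M6.
Variable R : realType.
Variable c : R.
Lemma difI (x : 'rV[R]_4) (a : 'I_(4 - 2)) : phi_dom x -> differentiable (@Iv R c a) x.
Proof.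
rewrite /phi_dom /cs /ct /cu /cv /=; case=> [hst [ht [hs huv]]].
rewrite /Iv /I1 /I2; case: a => [[|[|a]] Ha] //=; ftac; nz.
Qed.

Lemma main_c :
  measure_preserving (phi_map c) (@phi_dom R) (mdens c) /\
  (is_poisson (Omega c) (@phi_dom R) /\
   preserves_poisson (phi_map c) (@phi_dom R) (Omega c)) /\
  liouville_integrable (phi_map c) (@phi_dom R).
Proof.
split; [| split; [split|]].
- by move=> x hx; apply: meas.
- exact: poisO.
- by move=> x hx hy; apply: presO.
- exists (@Pm R), 2%N.
  split; first exact: poisP.
  split; first by move=> x hx hy; apply: presP.
  split; first by move=> x _; apply: rk_le.
  split; first by exists (x0 R); split; [exact: x0_dom | exact: rk_x0].
  exists (@Iv R c).
  split; first by move=> a x hx; apply: difI.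
  split; first by move=> a x hx hy; apply: invI.
  split; first exact: dense.
  by move=> a b x hx; apply: brI.
Qed.
End M6.

From mathcomp Require Import complex.

Theorem proposition3p2 (R : realType) (p q : R[i])
    (hpq : complex.Im (p - q) = 0) :
  let c := complex.Re (p - q) in
  measure_preserving (phi_map c) (@phi_dom R) (mdens c) /\
  (is_poisson (Omega c) (@phi_dom R) /\
   preserves_poisson (phi_map c) (@phi_dom R) (Omega c)) /\
  liouville_integrable (phi_map c) (@phi_dom R).
Proof. move=> c; exact: main_c. Qed.
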